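(* Let $b,n\in\mathbb N$ with $b\ge 2$. Let $m$ be a natural number that is antipalindromic in base $b^n$, with base-$b^n$ expansion $(m)_{b^n}=u_k\dots u_1u_0$ (so $u_j\in\{0,\dots,b^n-1\}$ and $m=\sum_{j=0}^k u_j b^{nj}$), and assume $u_k\ge b^{n-1}$. Then $m$ is also antipalindromic in base $b$ if and only if, for every $j\in\{0,1,\dots,k\}$, the base-$b$ expansion of $u_j$ padded with leading zeros to length exactly $n$ (i.e., the string $v_{j,n-1}\dots v_{j,1}v_{j,0}$ with $v_{j,i}\in\{0,\dots,b-1\}$ and $u_j=\sum_{i=0}^{n-1}v_{j,i}b^i$) is a palindrome, i.e., $v_{j,i}=v_{j,n-1-i}$ for all $i\in\{0,\dots,n-1\}$.
   Context: For an integer $B\ge 2$, every natural number $x$ has a unique base-$B$ expansion $x=a_\ell B^\ell+\dots+a_1B+a_0$ with $a_0,\dots,a_\ell\in\{0,1,\dots,B-1\}$ and $a_\ell\neq 0$, written $(x)_B=a_\ell\dots a_1a_0$. The number $x$ is antipalindromic in base $B$ if $a_j=B-1-a_{\ell-j}$ for all $j\in\{0,1,\dots,\ell\}$. A string $w_{n-1}\dots w_0$ is a palindrome if $w_i=w_{n-1-i}$ for all $i$. *)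

(* Defs.v *)
From mathcomp Require Import all_boot.
Set Implicit Arguments. Unset Strict Implicit. Unset Printing Implicit Defensive.

(* Little-endian base-B digit list a_0 :: a_1 :: ... :: a_l of x (no leading
   zeros, so the last entry a_l is nonzero); digits of 0 is [::].
   Fuel x suffices since each step divides by B >= 2. *)
Fixpoint digits_aux (fuel B x : nat) : seq nat :=
  match fuel with
  | 0 => [::]
  | f.+1 => if x == 0 then [::] else x %% B :: digits_aux f B (x %/ B)
  end.

Definition digits (B x : nat) : seq nat := digits_aux x B x.

Definition antipalindromic (B x : nat) : Prop :=
  let s := digits B x in
  forall j, j < size s -> nth 0 s j = B - 1 - nth 0 s (size s - 1 - j).

Definition padded_digits (B n x : nat) : seq nat :=
  mkseq (fun i => (x %/ B ^ i) %% B) n.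

Definition palindrome (s : seq nat) : Prop :=
  forall i, i < size s -> nth 0 s i = nth 0 s (size s - 1 - i).

(* Main.v *)
Require Import Defs.
From mathcomp Require Import all_boot.
From mathcomp Require Import zify ring.

Lemma aux_nth B : 1 < B -> forall f x i, x <= f ->
  nth 0 (digits_aux f B x) i = x %/ B^i %% B.
Proof.
move=> B1; elim=> [|f IH] x i hx /=.
  by move: hx; rewrite leqn0 => /eqP->; rewrite nth_nil div0n mod0n.
case: eqP => [->|/eqP x0]; first by rewrite nth_nil div0n mod0n.
case: i => [|i] /=; first by rewrite expn0 divn1.
rewrite IH; first by rewrite expnS divnMA.
have := ltn_Pdiv B1 (_ : 0 < x); last by rewrite lt0n; lia.
Qed.

Lemma digits_nth B x i : 1 < B -> nth 0 (digits B x) i = x %/ B^i %% B.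
Proof. by move=> B1; apply: aux_nth. Qed.

Lemma aux0 B f : digits_aux f B 0 = [::].
Proof. by case: f. Qed.

Lemma aux_size B : 1 < B -> forall f x, x <= f ->
  x < B ^ size (digits_aux f B x) /\
  (0 < x -> B ^ (size (digits_aux f B x)).-1 <= x).
Proof.
move=> B1; elim=> [|f IH] x hx /=.
  by move: hx; rewrite leqn0 => /eqP->.
case: eqP => [->|/eqP x0] //=.
have hxf : x %/ B <= f by have := ltn_Pdiv B1 (_ : 0 < x); last by rewrite lt0n; lia.
have [hu hl] := IH _ hxf.
split.
  by rewrite expnSr -ltn_divLR //; lia.
move=> _.
case: (posnP (x %/ B)) => [e|p].
  by rewrite e aux0 /= expn0; lia.
have := hl p.
move: hu; set s := size _ => hu.
case: s hu => [|s] hu /=.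
  by rewrite expn0 in hu; lia.
by rewrite expnSr leq_divRL //; lia.
Qed.

Lemma digits_bounds B x : 1 < B -> 0 < x ->
  B ^ (size (digits B x)).-1 <= x < B ^ size (digits B x).
Proof.
move=> B1 x0; have [h1 h2] := @aux_size B B1 x x (leqnn x).
by rewrite /digits (h2 x0) h1.
Qed.

Lemma low_mod b n y i : 0 < b -> i < n ->
  y %/ b^i %% b = (y %% b^n) %/ b^i %% b.
Proof.
move=> b0 hi.
have bi : 0 < b^i by rewrite expn_gt0 b0.
rewrite {1}(divn_eq y (b^n)).
have -> : b^n = (b^(n-i-1) * b) * b^i by rewrite -expnSr -expnD; congr (_ ^ _); lia.
rewrite mulnA divnMDl //.
by rewrite mulnA modnMDl.
Qed.

Lemma compl b n u i : 0 < b -> i < n -> u < b^n ->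
  (b^n - 1 - u) %/ b^i %% b = b - 1 - u %/ b^i %% b.
Proof.
move=> b0 hi hu.
set P := b^i; set Q := b^(n-i-1).
have P0 : 0 < P by rewrite expn_gt0 b0.
have hB : b^n = Q * b * P by rewrite /P /Q -expnSr -expnD; congr (_ ^ _); lia.
rewrite hB in hu *.
set A := u %/ P %/ b; set c := u %/ P %% b; set r := u %% P.
have hc : c < b by rewrite ltn_pmod.
have hr : r < P by rewrite ltn_pmod.
have hA : A < Q by rewrite /A !ltn_divLR //; lia.
have eu : u = (A * b + c) * P + r by rewrite /A /c /r -divn_eq -divn_eq.
have -> : Q * b * P - 1 - u = ((Q-1-A)*b + (b-1-c))*P + (P-1-r).
  rewrite eu.
  have [A' eA] : exists A', Q = A + 1 + A' by exists (Q-1-A); lia.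
  have [c' ec] : exists c', b = c + 1 + c' by exists (b-1-c); lia.
  have [r' er] : exists r', P = r + 1 + r' by exists (P-1-r); lia.
  rewrite eA ec er.
  have -> : A + 1 + A' - 1 - A = A' by lia.
  have -> : c + 1 + c' - 1 - c = c' by lia.
  have -> : r + 1 + r' - 1 - r = r' by lia.
  set X := (A' * _ + c') * _ + r'.
  set Y := (A * _ + c) * _ + r.
  have -> : (A + 1 + A') * (c + 1 + c') * (r + 1 + r') = X + 1 + Y.
    by rewrite /X /Y; ring.
  lia.
rewrite divnMDl // divn_small ?addn0; last by lia.
by rewrite modnMDl modn_small //; lia.
Qed.

Lemma idx n K j i : j < K -> i < n -> n*K-1-(n*j+i) = n*(K-1-j)+(n-1-i).
Proof. nia. Qed.
Lemma idx_lt n K j i : j < K -> i < n -> n*j+i < n*K.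
Proof. nia. Qed.
Lemma idx_top n K : 0 < n -> 0 < K -> n - 1 + n * (K - 1) = n * K - 1.
Proof. nia. Qed.

Lemma size_eq b m s S : 1 < b -> b ^ (s - 1) <= m -> m < b ^ s ->
  b ^ S.-1 <= m -> m < b ^ S -> S = s.
Proof.
move=> b1 l1 h1 l2 h2.
apply/eqP; rewrite eqn_leq; apply/andP; split.
  rewrite leqNgt; apply/negP => h.
  have : b ^ s <= b ^ S.-1 by rewrite leq_exp2l //; lia.
  lia.
rewrite leqNgt; apply/negP => h.
have : b ^ S <= b ^ (s - 1) by rewrite leq_exp2l //; lia.
lia.
Qed.

Lemma rev_lt n i : i < n -> n - 1 - i < n.
Proof. lia. Qed.
Lemma compl2 b y : y < b -> b - 1 - (b - 1 - y) = y.
Proof. lia. Qed.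

Theorem mainTheorem17 (b n m : nat) :
  2 <= b -> 1 <= n ->
  antipalindromic (b ^ n) m ->
  b ^ (n - 1) <= nth 0 (digits (b ^ n) m) (size (digits (b ^ n) m) - 1) ->
  (antipalindromic b m <->
   forall j, j < size (digits (b ^ n) m) ->
     palindrome (padded_digits b n (nth 0 (digits (b ^ n) m) j))).
Proof.
move=> b2 n1 hA htop.
have b0 : 0 < b by lia.
have bn1 : 1 <= b ^ (n - 1) by rewrite expn_gt0 b0.
have B1 : 1 < b ^ n.
  have : b ^ 1 <= b ^ n by rewrite leq_exp2l.
  rewrite expn1; lia.
move: hA htop; rewrite /antipalindromic.
set B := b ^ n in B1 *.
set D := digits B m; set K := size D => hA htop.
have K0 : 0 < K.
  case: (posnP K) => // K00; move: htop; rewrite K00.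
  by move/eqP: K00; rewrite size_eq0 => /eqP ->; rewrite nth_nil; lia.
have m0 : 0 < m.
  case: (posnP m) => // m00; move: K0; rewrite /K /D m00.
  by rewrite /digits.
have u j : nth 0 D j = m %/ B^j %% B by apply: digits_nth.
have ult j : nth 0 D j < B by rewrite u ltn_pmod //; lia.
have a t : nth 0 (digits b m) t = m %/ b^t %% b by apply: digits_nth.
have vlt x t : x %/ b^t %% b < b by rewrite ltn_pmod.
have blk j i : i < n -> m %/ b^(n*j+i) %% b = (nth 0 D j) %/ b^i %% b.
  move=> hi; rewrite u -(@low_mod b n _ i b0 hi) /B -expnM expnD divnMA.
  by rewrite mulnC.
have cmp j : j < K -> nth 0 D (K-1-j) = B - 1 - nth 0 D j.
  move=> hj; rewrite hA; last by lia.
  by have -> : K - 1 - (K - 1 - j) = j by lia.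
have pad x i : i < n -> nth 0 (padded_digits b n x) i = x %/ b^i %% b.
  by move=> hi; rewrite nth_mkseq.
have hsizeb : size (digits b m) = n * K.
  have /andP [lo hi] := @digits_bounds b m b2 m0.
  have /andP [_ hiB] := @digits_bounds B m B1 m0.
  rewrite -/D -/K /B -expnM in hiB.
  have lo2 : b ^ (n * K - 1) <= m.
    have e1 : b ^ (n * K - 1) = b ^ (n-1) * B ^ (K-1).
      by rewrite /B -expnM -expnD idx_top.
    have e2 : m %/ B ^ (K-1) * B ^ (K-1) <= m by apply: leq_divM.
    have e3 : nth 0 D (K - 1) <= m %/ B ^ (K-1) by rewrite u leq_mod.
    rewrite e1; apply: leq_trans e2; apply: leq_mul => //; exact: leq_trans htop e3.
  exact: (size_eq _ _ _ _ b2 lo2 hiB lo hi).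
split.
  move=> hb j hj; rewrite /palindrome size_mkseq => i hi.
  have hi' := rev_lt _ _ hi.
  rewrite !pad //.
  have := hb (n*j+i); rewrite hsizeb !a.
  rewrite idx //.
  rewrite !blk // cmp // compl //.
move=> h; rewrite h; last by apply: idx_lt.
by rewrite compl2 // ltn_pmod.
move=> hp; rewrite hsizeb => t ht; rewrite !a.
have et := divn_eq t n.
have hi : t %% n < n by rewrite ltn_pmod.
have hj : t %/ n < K by rewrite ltn_divLR // mulnC.
move: et hi hj; set j := t %/ n; set i := t %% n => et hi hj.
clearbody j i.
have -> : t = n * j + i by rewrite et mulnC.
rewrite idx //.
have hi' := rev_lt _ _ hi.
rewrite !blk // cmp // compl //.
have := hp j hj i; rewrite size_mkseq !pad // => h; rewrite h //.
by rewrite compl2 // ltn_pmod.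
Qed.
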